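(* Let $(X,\mu)$ be a $\sigma$-finite measure space and let $f,g\in L^1(X,\mu)$ be such that there exists $S\in S\mathcal{D}(L^1(X))$ with $f=Sg$. Then for every sublinear functional $\varphi:\mathbb{R}\to\mathbb{R}^+$, $$\int_X\varphi(f)\,d\mu\le\int_X\varphi(g)\,d\mu.$$
   Context: A sublinear functional $\varphi:\mathbb{R}\to\mathbb{R}^+$ is a convex and positively homogeneous map. $S\mathcal{D}(L^1(X))$ denotes the set of semi-doubly stochastic operators on $L^1(X)$: positive linear operators $T:L^1(X)\to L^1(X)$ with $\int_X Tf\,d\mu=\int_X f\,d\mu$ for all $f\in L^1(X)$ and $\int_X T^*\chi_E\,d\mu\le\mu(E)$ for every measurable $E$ with $\mu(E)<\infty$, where $T^*:L^\infty(X)\to L^\infty(X)$ is the Banach adjoint. *)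

(* Defs.v *)
From HB Require Import structures.
From mathcomp Require Import all_boot all_order all_algebra.
From mathcomp Require Import all_classical all_reals all_analysis.
Set Implicit Arguments. Unset Strict Implicit. Unset Printing Implicit Defensive.
Import Order.TTheory GRing.Theory Num.Theory.
Local Open Scope classical_set_scope.
Local Open Scope ring_scope.

(* Elements of L^1(X,mu) are represented by integrable representatives
   f : T -> R; equality in L^1 is equality mu-a.e. *)
Definition L1 d (T : measurableType d) (R : realType)
  (mu : {measure set T -> \bar R}) (f : T -> R) : Prop :=
  mu.-integrable setT (EFin \o f).

Definition Linfty d (T : measurableType d) (R : realType)
  (mu : {measure set T -> \bar R}) (h : T -> R) : Prop :=
  measurable_fun setT h /\ exists M : R, {ae mu, forall x, `|h x| <= M}.

(* An operator on L^1 given on representatives: it maps L^1 to L^1, is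
   well defined on a.e.-classes, and is linear (up to a.e. equality). *)
Definition L1_linear_operator d (T : measurableType d) (R : realType)
  (mu : {measure set T -> \bar R}) (S : (T -> R) -> (T -> R)) : Prop :=
  [/\ (forall f, L1 mu f -> L1 mu (S f)),
      (forall f1 f2, L1 mu f1 -> L1 mu f2 -> f1 = f2 %[ae mu] ->
         S f1 = S f2 %[ae mu]) &
      (forall (a : R) f1 f2, L1 mu f1 -> L1 mu f2 ->
         S (fun x => a * f1 x + f2 x) = (fun x => a * S f1 x + S f2 x) %[ae mu])].

(* h is (a representative of) the Banach adjoint S^* applied to u in L^infty:
   h in L^infty and  int (S^* u) f = int u (S f)  for all f in L^1. *)
Definition is_adjoint_image d (T : measurableType d) (R : realType)
  (mu : {measure set T -> \bar R}) (S : (T -> R) -> (T -> R)) (u h : T -> R) : Prop :=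
  Linfty mu h /\
  forall f, L1 mu f ->
    (\int[mu]_x (h x * f x)%:E = \int[mu]_x (u x * S f x)%:E)%E.

Definition semi_doubly_stochastic d (T : measurableType d) (R : realType)
  (mu : {measure set T -> \bar R}) (S : (T -> R) -> (T -> R)) : Prop :=
  [/\ L1_linear_operator mu S,
      (forall f, L1 mu f -> {ae mu, forall x, 0 <= f x} ->
         {ae mu, forall x, 0 <= S f x}),
      (forall f, L1 mu f ->
         (\int[mu]_x (S f x)%:E = \int[mu]_x (f x)%:E)%E) &
      (forall E, measurable E -> (mu E < +oo)%E ->
         forall h, is_adjoint_image mu S (\1_E) h ->
           (\int[mu]_x (h x)%:E <= mu E)%E)].

Definition sublinear_functional (R : realType) (phi : R -> R) : Prop :=
  [/\ (forall x, 0 <= phi x),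
      (forall (t x y : R), 0 <= t -> t <= 1 ->
         phi (t * x + (1 - t) * y) <= t * phi x + (1 - t) * phi y) &
      (forall (l x : R), 0 < l -> phi (l * x) = l * phi x)].

(* Main.v *)
Require Import Defs.
From HB Require Import structures.
From mathcomp Require Import all_boot all_order all_algebra.
From mathcomp Require Import all_classical all_reals all_analysis.
From mathcomp Require Import lra measurable_realfun.
Import Order.TTheory GRing.Theory Num.Theory Num.Def.
Local Open Scope classical_set_scope.
Local Open Scope ring_scope.

Lemma pos_part_le (d : measure_display) (T : measurableType d) (R : realType)
  (mu : {measure set T -> \bar R}) (f P N : T -> R) :
  measurable_fun setT f -> L1 mu P ->
  {ae mu, forall x, 0 <= P x} -> {ae mu, forall x, 0 <= N x} ->
  {ae mu, forall x, f x = P x - N x} ->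
  (\int[mu]_x (maxr (f x) 0)%:E <= \int[mu]_x (P x)%:E)%E.
Proof.
move=> mf LP P0 N0 fPN.
have mP : measurable_fun setT P by apply/measurable_EFinP; exact: measurable_int LP.
apply: (@le_trans _ _ (\int[mu]_x (maxr (P x) 0)%:E)%E).
- apply: ae_ge0_le_integral => //.
  + by move=> x _; rewrite lee_fin le_max lexx orbT.
  + by apply/measurable_EFinP; apply: measurable_maxr => //; exact: measurable_cst.
  + by move=> x _; rewrite lee_fin le_max lexx orbT.
  + by apply/measurable_EFinP; apply: measurable_maxr => //; exact: measurable_cst.
  + apply: filterS3 P0 N0 fPN => x Px Nx fx _.
    rewrite lee_fin fx ge_max !le_max lexx orbT andbT.
    apply/orP; left; lra.
- rewrite le_eqVlt; apply/orP; left; apply/eqP.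
  apply: ae_eq_integral => //.
  + by apply/measurable_EFinP; apply: measurable_maxr => //; exact: measurable_cst.
  + by apply/measurable_EFinP.
  + apply: filterS P0 => x Px _.
    by rewrite max_l.
Qed.
Arguments pos_part_le {d T R mu f P N}.

Theorem corollary4p2 (d : measure_display) (T : measurableType d) (R : realType)
  (mu : {measure set T -> \bar R}) (f g : T -> R) :
  sigma_finite setT mu ->
  L1 mu f -> L1 mu g ->
  (exists S, semi_doubly_stochastic mu S /\ f = S g %[ae mu]) ->
  forall phi : R -> R, sublinear_functional phi ->
    (\int[mu]_x (phi (f x))%:E <= \int[mu]_x (phi (g x))%:E)%E.
Proof.
move=> _ Lf Lg [S [[[SL1 Swd Slin] Spos Sint _] fSg]] phi [phi0 _ phihom].
pose a := phi 1; pose b := phi (-1).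
have a0 : 0 <= a by exact: phi0.
have b0 : 0 <= b by exact: phi0.
have phi00 : phi 0 = 0.
  have := phihom 2 0 (@ltr0Sn R 1); rewrite mulr0 => h; lra.
have phiE : forall x, phi x = a * maxr x 0 + b * maxr (- x) 0.
  move=> x; have [x0|x0|->] := ltgtP x 0.
  - have h := phihom (- x) (-1); rewrite mulrN1 opprK oppr_gt0 in h.
    rewrite h // ?(max_r (ltW x0)) ?max_l ?oppr_ge0 ?(ltW x0) //; rewrite /b; lra.
  - have h := phihom x 1; rewrite mulr1 in h.
    rewrite h // ?(max_l (ltW x0)) ?max_r ?oppr_le0 ?(ltW x0) //; rewrite /a; lra.
  - by rewrite phi00 oppr0 maxxx !mulr0 addr0.
have mf : measurable_fun setT f by apply/measurable_EFinP; exact: measurable_int Lf.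
have mg : measurable_fun setT g by apply/measurable_EFinP; exact: measurable_int Lg.
pose gp := fun x => maxr (g x) 0.
pose gn := fun x => maxr (- g x) 0.
have mgp : measurable_fun setT gp.
  by apply: measurable_maxr => //; exact: measurable_cst.
have mgn : measurable_fun setT gn.
  by apply: measurable_maxr => //; apply: measurableT_comp.
have Lgp : L1 mu gp.
  apply: le_integrable Lg => //; first by apply/measurable_EFinP.
  move=> x _ /=; rewrite lee_fin /gp ler_norml; apply/andP; split.
  - have : 0 <= maxr (g x) 0 by rewrite le_max lexx orbT.
    have := normr_ge0 (g x); lra.
  - rewrite ge_max normr_ge0 ler_norm //.
have Lgn : L1 mu gn.
  apply: le_integrable Lg => //; first by apply/measurable_EFinP.
  move=> x _ /=; rewrite lee_fin /gn ler_norml; apply/andP; split.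
  - have : 0 <= maxr (- g x) 0 by rewrite le_max lexx orbT.
    have := normr_ge0 (g x); lra.
  - by rewrite ge_max normr_ge0 -normrN ler_norm.
have gE : (fun x => -1 * gn x + gp x) = g.
  apply/funext => x; rewrite /gn /gp; have [g0|g0] := leP (g x) 0.
  - rewrite ?(max_r g0) ?max_l ?oppr_ge0 //; lra.
  - rewrite ?(max_l (ltW g0)) ?max_r ?oppr_le0 ?(ltW g0) //; lra.
have Sdec := Slin (-1) gn gp Lgn Lgp; rewrite gE in Sdec.
have Pp : {ae mu, forall x, 0 <= S gp x}.
  by apply: Spos => //; apply: aeW => x; rewrite /gp le_max lexx orbT.
have Pn : {ae mu, forall x, 0 <= S gn x}.
  by apply: Spos => //; apply: aeW => x; rewrite /gn le_max lexx orbT.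
have fE : {ae mu, forall x, f x = S gp x - S gn x}.
  apply: filterS2 fSg Sdec => x h1 h2; rewrite h1 // h2 //; lra.
have fE' : {ae mu, forall x, - f x = S gn x - S gp x}.
  by apply: filterS fE => x ->; rewrite opprB.
have H1 := pos_part_le mf (SL1 _ Lgp) Pp Pn fE.
have mNf : measurable_fun setT (fun x => - f x) by apply: measurableT_comp.
have H2 := pos_part_le mNf (SL1 _ Lgn) Pn Pp fE'.
rewrite (Sint _ Lgp) in H1; rewrite (Sint _ Lgn) in H2.
have split_int : forall h : T -> R, measurable_fun setT h ->
    (\int[mu]_x (phi (h x))%:E = a%:E * \int[mu]_x (maxr (h x) 0)%:E
       + b%:E * \int[mu]_x (maxr (- h x) 0)%:E)%E.
  move=> h mh.
  have -> : (fun x => (phi (h x))%:E) =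
      (fun x => a%:E * (maxr (h x) 0)%:E + b%:E * (maxr (- h x) 0)%:E)%E.
    by apply/funext => x; rewrite phiE EFinD !EFinM.
  have mhp : measurable_fun setT (fun x => (maxr (h x) 0)%:E).
    by apply/measurable_EFinP; apply: measurable_maxr => //; exact: measurable_cst.
  have mhn : measurable_fun setT (fun x => (maxr (- h x) 0)%:E).
    by apply/measurable_EFinP; apply: measurable_maxr => //; apply: measurableT_comp.
  have hp0 : forall x, setT x -> (0 <= (maxr (h x) 0)%:E)%E.
    by move=> x _; rewrite lee_fin le_max lexx orbT.
  have hn0 : forall x, setT x -> (0 <= (maxr (- h x) 0)%:E)%E.
    by move=> x _; rewrite lee_fin le_max lexx orbT.
  rewrite ge0_integralD //.
  - by rewrite !ge0_integralZl.
  - by move=> x _; apply: mule_ge0; [rewrite lee_fin | exact: hp0].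
  - exact: measurable_funeM.
  - by move=> x _; apply: mule_ge0; [rewrite lee_fin | exact: hn0].
  - exact: measurable_funeM.
rewrite (split_int f mf) (split_int g mg).
apply: leeD; apply: lee_wpmul2l; rewrite ?lee_fin //.
Qed.
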